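(* Let $f,g\in\mathrm{Diffeo}^-(\mathbb{R})$ with $f(0)=g(0)=0$. Then the following two conditions are equivalent: (1) $f=h^{-1}\circ g\circ h$ for some $h\in\mathrm{Diffeo}^+(\mathbb{R})$. (2) (a) There exists $h_1\in\mathrm{Diffeo}^+(\mathbb{R})$ with $h_1(0)=0$ such that $f\circ f=h_1^{-1}\circ (g\circ g)\circ h_1$; and (b) letting $g_1=h_1^{-1}\circ g\circ h_1$, there exists $h_2\in\mathrm{Diffeo}^+(\mathbb{R})$ with $h_2(0)=0$ and $h_2\circ(f\circ f)=(f\circ f)\circ h_2$, such that $T_0 f=(T_0h_2)^{-1}\circ (T_0 g_1)\circ (T_0 h_2)$ in the group of formal power series under composition.
   Context: $\mathrm{Diffeo}(\mathbb{R})$ is the group of $C^\infty$ diffeomorphisms of $\mathbb{R}$ under composition; $\mathrm{Diffeo}^+(\mathbb{R})$ (resp. $\mathrm{Diffeo}^-(\mathbb{R})$) is the set of orientation-preserving (resp. orientation-reversing) diffeomorphisms. For a diffeomorphism $\phi$ with $\phi(0)=0$, $T_0\phi$ denotes its Taylor series at $0$, $T_0\phi=\phi'(0)X+\frac{\phi''(0)}{2}X^2+\cdots$, regarded as an element of the group $F$ of formally invertible formal power series with real coefficients in the indeterminate $X$ (zero constant term, nonzero coefficient of $X$), with group operation formal composition and $^{-1}$ denoting compositional inverse; $T_0$ is a homomorphism from the group of diffeomorphisms fixing $0$ to $F$. *)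

(* Defs.v *)
From Stdlib Require Import Reals.
From Coquelicot Require Import Coquelicot.
Open Scope R_scope.

Definition smooth (f : R -> R) : Prop := forall (n : nat) (x : R), ex_derive_n f n x.

Definition inverse_fun (f g : R -> R) : Prop :=
  (forall x, g (f x) = x) /\ (forall y, f (g y) = y).

Definition diffeo (f : R -> R) : Prop :=
  smooth f /\ exists g, inverse_fun f g /\ smooth g.

Definition diffeo_plus (f : R -> R) : Prop :=
  diffeo f /\ forall x y, x < y -> f x < f y.
Definition diffeo_minus (f : R -> R) : Prop :=
  diffeo f /\ forall x y, x < y -> f y < f x.

Definition fps := nat -> R.

Definition fps_X : fps := fun n => if Nat.eqb n 1 then 1 else 0.
Definition fps_one : fps := fun n => if Nat.eqb n 0 then 1 else 0.

Definition fps_mul (A B : fps) : fps :=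
  fun n => sum_f_R0 (fun i => A i * B (n - i)%nat) n.
Fixpoint fps_pow (B : fps) (k : nat) : fps :=
  match k with
  | O => fps_one
  | S k' => fps_mul B (fps_pow B k')
  end.

(** Formal composition A o B (meaningful for B with zero constant term,
    which is the case for all elements of the group F). *)
Definition fps_comp (A B : fps) : fps :=
  fun n => sum_f_R0 (fun k => A k * fps_pow B k n) n.

Definition T0 (phi : R -> R) : fps :=
  fun n => Derive_n phi n 0 / INR (Factorial.fact n).

(* Main.v *)
Require Import Defs.
From Stdlib Require Import Reals Lra Lia Arith FunctionalExtensionality.
From Coquelicot Require Import Coquelicot.
Open Scope R_scope.

Lemma Derive_n_S (f : R -> R) n x : Derive_n f (S n) x = Derive_n (Derive f) n x.
Proof.
  replace (S n) with (n + 1)%nat by lia. rewrite <- (Derive_n_comp f n 1 x). reflexivity.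
Qed.

Definition Cn (n : nat) (f : R -> R) := forall k, (k <= n)%nat -> forall x, ex_derive_n f k x.

Lemma Cn_S n f : Cn (S n) f <-> (forall x, ex_derive f x) /\ Cn n (Derive f).
Proof.
  split.
  - intros H. split.
    + intros x. exact (H 1%nat ltac:(lia) x).
    + intros k Hk x. destruct k as [|k]. exact I.
      simpl. apply ex_derive_ext with (f := Derive_n f (S k)).
      { intros t. apply Derive_n_S. }
      exact (H (S (S k)) ltac:(lia) x).
  - intros [H1 H2] k Hk x. destruct k as [|k]. exact I.
    destruct k as [|k]. exact (H1 x).
    simpl. apply ex_derive_ext with (f := Derive_n (Derive f) k).
    { intros t. symmetry. apply Derive_n_S. }
    exact (H2 (S k) ltac:(lia) x).
Qed.

Lemma Cn_le n m f : (m <= n)%nat -> Cn n f -> Cn m f.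
Proof. intros Hmn H k Hk x. apply H. lia. Qed.

Lemma Cn_ext n f g : (forall x, f x = g x) -> Cn n f -> Cn n g.
Proof. intros E H k Hk x. apply ex_derive_n_ext with f. exact E. apply H; auto. Qed.

Lemma Cn_plus n f g : Cn n f -> Cn n g -> Cn n (fun x => f x + g x).
Proof.
  intros Hf Hg k Hk x. apply ex_derive_n_plus; apply filter_forall; intros y j Hj;
  [apply Hf | apply Hg]; lia.
Qed.

Lemma Cn_mult n : forall f g, Cn n f -> Cn n g -> Cn n (fun x => f x * g x).
Proof.
  induction n as [|n IH]; intros f g Hf Hg.
  - intros k Hk x. replace k with 0%nat by lia. exact I.
  - apply Cn_S in Hf as [Hf1 Hf2]. apply Cn_S in Hg as [Hg1 Hg2].
    apply Cn_S. split.
    + intros x. apply ex_derive_mult; auto.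
    + apply Cn_ext with (fun x => Derive f x * g x + f x * Derive g x).
      { intros x. symmetry. apply Derive_mult; auto. }
      apply Cn_plus; apply IH; auto.
      * apply Cn_le with (S n). lia. apply Cn_S. auto.
      * apply Cn_le with (S n). lia. apply Cn_S. auto.
Qed.

Lemma Cn_comp n : forall f g, Cn n f -> Cn n g -> Cn n (fun x => f (g x)).
Proof.
  induction n as [|n IH]; intros f g Hf Hg.
  - intros k Hk x. replace k with 0%nat by lia. exact I.
  - pose proof Hf as Hf'. pose proof Hg as Hg'.
    apply Cn_S in Hf as [Hf1 Hf2]. apply Cn_S in Hg as [Hg1 Hg2].
    apply Cn_S. split.
    + intros x. apply ex_derive_comp; auto.
    + apply Cn_ext with (fun x => Derive f (g x) * Derive g x).
      { intros x. rewrite (Derive_comp f g x); auto. apply Rmult_comm. }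
      apply Cn_mult; auto.
      apply (IH (Derive f) g); auto.
      apply Cn_le with (S n). lia. auto.
Qed.

Lemma smooth_Cn f : smooth f <-> forall n, Cn n f.
Proof.
  split.
  - intros H n k Hk x. apply H.
  - intros H n x. apply (H n n (le_n n)).
Qed.

Lemma smooth_comp f g : smooth f -> smooth g -> smooth (fun x => f (g x)).
Proof. rewrite !smooth_Cn. intros Hf Hg n. apply Cn_comp; auto. Qed.

Lemma smooth_id : smooth (fun x => x).
Proof.
  intros n x. apply ex_derive_n_ext with (fun x => x ^ 1).
  intros t; simpl; ring. apply ex_derive_n_pow.
Qed.

Lemma smooth_opp f : smooth f -> smooth (fun x => f (- x)).
Proof.
  intros H. apply smooth_comp; auto.
  intros n x. apply ex_derive_n_ext with (fun x => (-1) * x ^ 1).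
  intros t; simpl; ring. apply ex_derive_n_scal_l. apply ex_derive_n_pow.
Qed.

Definition glue (u v : R -> R) (x : R) : R := if Rlt_dec x 0 then u x else v x.

Lemma glue1 u v : (forall x, ex_derive u x) -> (forall x, ex_derive v x) ->
  u 0 = v 0 -> Derive u 0 = Derive v 0 ->
  forall x, is_derive (glue u v) x (glue (Derive u) (Derive v) x).
Proof.
  intros Hu Hv E0 E1 x.
  destruct (Rtotal_order x 0) as [Hx|[Hx|Hx]].
  - unfold glue at 2. destruct (Rlt_dec x 0); [|lra].
    apply is_derive_ext_loc with u.
    { apply (filter_imp (fun t => t < 0)). intros t Ht. unfold glue.
      destruct (Rlt_dec t 0); [reflexivity|lra]. apply (open_lt 0 x Hx). }
    apply Derive_correct; auto.
  - subst x. unfold glue at 2. destruct (Rlt_dec 0 0); [lra|].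
    apply is_derive_Reals.
    pose proof (proj1 (is_derive_Reals _ _ _) (Derive_correct u 0 (Hu 0))) as Du.
    pose proof (proj1 (is_derive_Reals _ _ _) (Derive_correct v 0 (Hv 0))) as Dv.
    intros eps Heps.
    destruct (Du eps Heps) as [d1 Hd1]. destruct (Dv eps Heps) as [d2 Hd2].
    assert (Hd : 0 < Rmin d1 d2) by (apply Rmin_pos; apply cond_pos).
    exists (mkposreal _ Hd). intros h Hh0 Hh. simpl in Hh.
    unfold glue. destruct (Rlt_dec 0 0); [lra|].
    destruct (Rlt_dec (0 + h) 0).
    + rewrite <- E0, <- E1. apply Hd1; auto. apply Rlt_le_trans with (1 := Hh). apply Rmin_l.
    + apply Hd2; auto. apply Rlt_le_trans with (1 := Hh). apply Rmin_r.
  - unfold glue at 2. destruct (Rlt_dec x 0); [lra|].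
    apply is_derive_ext_loc with v.
    { apply (filter_imp (fun t => 0 < t)). intros t Ht. unfold glue.
      destruct (Rlt_dec t 0); [lra|reflexivity]. apply (open_gt 0 x Hx). }
    apply Derive_correct; auto.
Qed.

Lemma Cn_glue n : forall u v, Cn n u -> Cn n v ->
  (forall k, (k <= n)%nat -> Derive_n u k 0 = Derive_n v k 0) -> Cn n (glue u v).
Proof.
  induction n as [|n IH]; intros u v Hu Hv E.
  - intros k Hk x. replace k with 0%nat by lia. exact I.
  - apply Cn_S in Hu as [Hu1 Hu2]. apply Cn_S in Hv as [Hv1 Hv2].
    assert (G := glue1 u v Hu1 Hv1 (E 0%nat ltac:(lia)) (E 1%nat ltac:(lia))).
    apply Cn_S. split.
    + intros x. eexists. apply G.
    + apply Cn_ext with (glue (Derive u) (Derive v)).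
      { intros x. symmetry. apply is_derive_unique. apply G. }
      apply IH; auto.
      intros k Hk. rewrite <- !Derive_n_S. apply E. lia.
Qed.

Lemma smooth_glue u v : smooth u -> smooth v ->
  (forall k, Derive_n u k 0 = Derive_n v k 0) -> smooth (glue u v).
Proof.
  rewrite !smooth_Cn. intros Hu Hv E n. apply Cn_glue; auto.
Qed.

Definition apx (n : nat) (u v : R -> R) : Prop :=
  exists C d, 0 < d /\ forall x, Rabs x < d -> Rabs (u x - v x) <= C * Rabs x ^ S n.

Definition bnd (u : R -> R) : Prop :=
  exists M d, 0 < d /\ forall x, Rabs x < d -> Rabs (u x) <= M.

Lemma approx_ext n u v : (forall x, u x = v x) -> apx n u v.
Proof.
  intros E. exists 0, 1. split. lra. intros x _. rewrite E, Rminus_diag, Rabs_R0. lra.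
Qed.

Lemma approx_sym n u v : apx n u v -> apx n v u.
Proof.
  intros [C [d [Hd H]]]. exists C, d. split; auto. intros x Hx.
  rewrite Rabs_minus_sym. auto.
Qed.

Lemma approx_trans n u v w : apx n u v -> apx n v w -> apx n u w.
Proof.
  intros [C1 [d1 [Hd1 H1]]] [C2 [d2 [Hd2 H2]]].
  exists (C1 + C2), (Rmin d1 d2). split. apply Rmin_pos; auto.
  intros x Hx. assert (Rabs x < d1) by (eapply Rlt_le_trans; [exact Hx| apply Rmin_l]).
  assert (Rabs x < d2) by (eapply Rlt_le_trans; [exact Hx| apply Rmin_r]).
  replace (u x - w x) with ((u x - v x) + (v x - w x)) by ring.
  eapply Rle_trans. apply Rabs_triang.
  specialize (H1 x H). specialize (H2 x H0). nra.
Qed.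

Lemma approx_plus n u u' v v' : apx n u u' -> apx n v v' ->
  apx n (fun x => u x + v x) (fun x => u' x + v' x).
Proof.
  intros [C1 [d1 [Hd1 H1]]] [C2 [d2 [Hd2 H2]]].
  exists (C1 + C2), (Rmin d1 d2). split. apply Rmin_pos; auto.
  intros x Hx. assert (Rabs x < d1) by (eapply Rlt_le_trans; [exact Hx| apply Rmin_l]).
  assert (Rabs x < d2) by (eapply Rlt_le_trans; [exact Hx| apply Rmin_r]).
  replace (u x + v x - (u' x + v' x)) with ((u x - u' x) + (v x - v' x)) by ring.
  eapply Rle_trans. apply Rabs_triang.
  specialize (H1 x H). specialize (H2 x H0). nra.
Qed.

Lemma approx_mult_l n w u u' : bnd w -> apx n u u' ->
  apx n (fun x => w x * u x) (fun x => w x * u' x).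
Proof.
  intros [M [d1 [Hd1 H1]]] [C [d2 [Hd2 H2]]].
  exists (M * C), (Rmin d1 d2). split. apply Rmin_pos; auto.
  intros x Hx. assert (Rabs x < d1) by (eapply Rlt_le_trans; [exact Hx| apply Rmin_l]).
  assert (Rabs x < d2) by (eapply Rlt_le_trans; [exact Hx| apply Rmin_r]).
  replace (w x * u x - w x * u' x) with (w x * (u x - u' x)) by ring.
  rewrite Rabs_mult. rewrite Rmult_assoc. apply Rmult_le_compat; auto using Rabs_pos.
Qed.

Lemma approx_mult_r n w u u' : bnd w -> apx n u u' ->
  apx n (fun x => u x * w x) (fun x => u' x * w x).
Proof.
  intros Hw Ha. destruct (approx_mult_l n w u u' Hw Ha) as [C [d [Hd H]]].
  exists C, d. split; auto. intros x Hx. rewrite (Rmult_comm (u x)), (Rmult_comm (u' x)). auto.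
Qed.

Lemma approx_mult n u u' v v' : bnd u -> bnd v' -> apx n u u' -> apx n v v' ->
  apx n (fun x => u x * v x) (fun x => u' x * v' x).
Proof.
  intros Bu Bv Hu Hv. apply approx_trans with (fun x => u x * v' x).
  apply approx_mult_l; auto. apply approx_mult_r; auto.
Qed.

Lemma bounded_mult u v : bnd u -> bnd v -> bnd (fun x => u x * v x).
Proof.
  intros [M1 [d1 [Hd1 H1]]] [M2 [d2 [Hd2 H2]]].
  exists (M1 * M2), (Rmin d1 d2). split. apply Rmin_pos; auto.
  intros x Hx. assert (Rabs x < d1) by (eapply Rlt_le_trans; [exact Hx| apply Rmin_l]).
  assert (Rabs x < d2) by (eapply Rlt_le_trans; [exact Hx| apply Rmin_r]).
  rewrite Rabs_mult. apply Rmult_le_compat; auto using Rabs_pos.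
Qed.

Lemma bounded_const c : bnd (fun _ => c).
Proof. exists (Rabs c), 1. split. lra. intros; lra. Qed.

Lemma bounded_pow u k : bnd u -> bnd (fun x => u x ^ k).
Proof.
  intros Hu. induction k as [|k IH]. exact (bounded_const 1).
  simpl. apply bounded_mult; auto.
Qed.

Lemma approx_pow n u u' k : bnd u -> bnd u' -> apx n u u' ->
  apx n (fun x => u x ^ k) (fun x => u' x ^ k).
Proof.
  intros Bu Bu' H. induction k as [|k IH]. apply approx_ext; reflexivity.
  simpl. apply approx_mult; auto. apply bounded_pow; auto.
Qed.

Lemma approx_scal n a u u' : apx n u u' -> apx n (fun x => a * u x) (fun x => a * u' x).
Proof. intros H. apply approx_mult_l; auto. apply bounded_const. Qed.

Lemma approx_sum n (u v : nat -> R -> R) N :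
  (forall k, (k <= N)%nat -> apx n (u k) (v k)) ->
  apx n (fun x => sum_f_R0 (fun k => u k x) N) (fun x => sum_f_R0 (fun k => v k x) N).
Proof.
  induction N as [|N IH]; intros H.
  - simpl. apply H. lia.
  - simpl. apply approx_plus. apply IH. intros; apply H; lia. apply H; lia.
Qed.

Lemma approx_bounded n u v : apx n u v -> bnd v -> bnd u.
Proof.
  intros [C [d1 [Hd1 H1]]] [M [d2 [Hd2 H2]]].
  exists (Rabs C + M), (Rmin 1 (Rmin d1 d2)). split. apply Rmin_pos. lra. apply Rmin_pos; auto.
  intros x Hx.
  assert (Rabs x < 1) by (eapply Rlt_le_trans; [exact Hx| apply Rmin_l]).
  assert (Rabs x < d1) by (eapply Rlt_le_trans; [exact Hx| eapply Rle_trans; [apply Rmin_r|apply Rmin_l]]).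
  assert (Rabs x < d2) by (eapply Rlt_le_trans; [exact Hx| eapply Rle_trans; [apply Rmin_r|apply Rmin_r]]).
  specialize (H1 x H0). specialize (H2 x H3).
  assert (Rabs x ^ S n <= 1).
  { rewrite <- (pow1 (S n)). apply pow_incr. split. apply Rabs_pos. lra. }
  assert (C * Rabs x ^ S n <= Rabs C).
  { eapply Rle_trans. apply Rle_abs. rewrite Rabs_mult. rewrite <- RPow_abs, Rabs_Rabsolu.
    assert (0 <= Rabs x ^ S n) by (apply pow_le; apply Rabs_pos).
    pose proof (Rabs_pos C). nra. }
  replace (u x) with ((u x - v x) + v x) by ring.
  eapply Rle_trans. apply Rabs_triang. lra.
Qed.

Lemma approx_comp n phi Q psi : apx n phi Q ->
  (exists L d, 0 < d /\ forall x, Rabs x < d -> Rabs (psi x) <= L * Rabs x) ->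
  apx n (fun x => phi (psi x)) (fun x => Q (psi x)).
Proof.
  intros [C [d1 [Hd1 H1]]] [L [d2 [Hd2 H2]]].
  set (L' := Rabs L + 1).
  assert (HL' : 0 < L') by (unfold L'; pose proof (Rabs_pos L); lra).
  exists (Rabs C * L' ^ S n), (Rmin d2 (d1 / L')). split.
  apply Rmin_pos; auto. apply Rdiv_lt_0_compat; auto.
  intros x Hx.
  assert (Hx2 : Rabs x < d2) by (eapply Rlt_le_trans; [exact Hx| apply Rmin_l]).
  assert (Hx1 : Rabs x < d1 / L') by (eapply Rlt_le_trans; [exact Hx| apply Rmin_r]).
  specialize (H2 x Hx2).
  assert (Hp : Rabs (psi x) <= L' * Rabs x).
  { eapply Rle_trans. exact H2. apply Rmult_le_compat_r. apply Rabs_pos.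
    unfold L'. pose proof (Rle_abs L). lra. }
  assert (Hp' : Rabs (psi x) < d1).
  { eapply Rle_lt_trans. exact Hp. apply Rmult_lt_reg_r with (/ L').
    apply Rinv_0_lt_compat; auto.
    replace (L' * Rabs x * / L') with (Rabs x) by (field; lra). exact Hx1. }
  eapply Rle_trans. apply H1. exact Hp'.
  eapply Rle_trans. apply Rle_abs. rewrite Rabs_mult, <- RPow_abs, Rabs_Rabsolu.
  rewrite Rmult_assoc. apply Rmult_le_compat_l. apply Rabs_pos.
  rewrite <- Rpow_mult_distr. apply pow_incr. split. apply Rabs_pos. exact Hp.
Qed.

Definition tpoly (c : nat -> R) (n : nat) (x : R) : R := sum_f_R0 (fun k => c k * x ^ k) n.

Lemma poly_bound c n x : Rabs x <= 1 -> Rabs (tpoly c n x) <= sum_f_R0 (fun k => Rabs (c k)) n.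
Proof.
  intros Hx. unfold tpoly. eapply Rle_trans. apply Rsum_abs. apply sum_Rle. intros k _.
  rewrite Rabs_mult, <- RPow_abs.
  assert (Rabs x ^ k <= 1). { rewrite <- (pow1 k). apply pow_incr. split. apply Rabs_pos. lra. }
  assert (0 <= Rabs x ^ k) by (apply pow_le; apply Rabs_pos).
  pose proof (Rabs_pos (c k)). nra.
Qed.

Lemma poly_bounded c n : bnd (tpoly c n).
Proof.
  exists (sum_f_R0 (fun k => Rabs (c k)) n), 1. split. lra. intros x Hx.
  apply poly_bound. lra.
Qed.

Lemma poly_at0 c n : tpoly c n 0 = c 0%nat.
Proof.
  unfold tpoly. induction n as [|n IH]. simpl. ring. simpl sum_f_R0. rewrite IH. simpl. ring.
Qed.

Lemma small_zero c K d : 0 < d -> (forall x, x <> 0 -> Rabs x < d -> Rabs c <= K * Rabs x) -> c = 0.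
Proof.
  intros Hd H. destruct (Req_dec c 0) as [E|E]; auto. exfalso.
  set (K' := Rabs K + 1).
  assert (HK : 0 < K') by (unfold K'; pose proof (Rabs_pos K); lra).
  assert (Hc : 0 < Rabs c) by (apply Rabs_pos_lt; auto).
  set (x := Rmin (d / 2) (Rabs c / (2 * K'))).
  assert (Hx : 0 < x) by (apply Rmin_pos; apply Rdiv_lt_0_compat; lra).
  assert (Hx1 : x <= d / 2) by apply Rmin_l.
  assert (Hx2 : x <= Rabs c / (2 * K')) by apply Rmin_r.
  specialize (H x ltac:(lra)). rewrite Rabs_pos_eq in H by lra.
  specialize (H ltac:(lra)).
  assert (K * x <= K' * x). { apply Rmult_le_compat_r. lra. unfold K'. pose proof (Rle_abs K). lra. }
  assert (K' * x <= Rabs c / 2).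
  { apply Rle_trans with (K' * (Rabs c / (2 * K'))). apply Rmult_le_compat_l; lra.
    right. field. lra. }
  lra.
Qed.

Lemma poly_zero n : forall d C del, 0 < del ->
  (forall x, x <> 0 -> Rabs x < del -> Rabs (tpoly d n x) <= C * Rabs x ^ S n) ->
  forall k, (k <= n)%nat -> d k = 0.
Proof.
  induction n as [|n IH]; intros d C del Hdel H.
  - intros k Hk. replace k with 0%nat by lia.
    apply (small_zero _ C del Hdel). intros x Hx Hx'. specialize (H x Hx Hx').
    unfold tpoly in H. simpl in H. replace (d 0%nat * 1) with (d 0%nat) in H by ring.
    replace (C * (Rabs x * 1)) with (C * Rabs x) in H by ring. exact H.
  - set (e := fun k => d (S k)).
    assert (Hdec : forall x, tpoly d (S n) x = d 0%nat + x * tpoly e n x).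
    { intros x. unfold tpoly. rewrite decomp_sum by lia. simpl pred. f_equal.
      simpl; ring. rewrite scal_sum. apply sum_eq. intros i _. unfold e. simpl. ring. }
    set (B := sum_f_R0 (fun k => Rabs (e k)) n).
    assert (HB : 0 <= B). { unfold B. apply cond_pos_sum. intros; apply Rabs_pos. }
    assert (Hd0 : d 0%nat = 0).
    { apply (small_zero _ (Rabs C + B) (Rmin del 1)). apply Rmin_pos; lra.
      intros x Hx Hx'.
      assert (Hxd : Rabs x < del) by (eapply Rlt_le_trans; [exact Hx'|apply Rmin_l]).
      assert (Hx1 : Rabs x < 1) by (eapply Rlt_le_trans; [exact Hx'|apply Rmin_r]).
      specialize (H x Hx Hxd). rewrite Hdec in H.
      pose proof (poly_bound e n x ltac:(lra)) as Pb. fold B in Pb.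
      assert (Rabs x ^ S (S n) <= Rabs x).
      { change (Rabs x ^ S (S n)) with (Rabs x * Rabs x ^ S n). pose proof (Rabs_pos x).
        assert (Rabs x ^ S n <= 1) by (rewrite <- (pow1 (S n)); apply pow_incr; lra).
        nra. }
      assert (C * Rabs x ^ S (S n) <= Rabs C * Rabs x).
      { eapply Rle_trans. apply Rle_abs. rewrite Rabs_mult, <- RPow_abs, Rabs_Rabsolu.
        apply Rmult_le_compat_l. apply Rabs_pos. exact H0. }
      replace (d 0%nat) with ((d 0%nat + x * tpoly e n x) - x * tpoly e n x) by ring.
      eapply Rle_trans. apply Rabs_triang. rewrite Rabs_Ropp, Rabs_mult.
      assert (Rabs x * Rabs (tpoly e n x) <= B * Rabs x).
      { rewrite Rmult_comm. apply Rmult_le_compat_r. apply Rabs_pos. exact Pb. }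
      lra. }
    assert (He : forall k, (k <= n)%nat -> e k = 0).
    { apply (IH e C del Hdel). intros x Hx Hx'. specialize (H x Hx Hx').
      rewrite Hdec, Hd0, Rplus_0_l, Rabs_mult in H.
      assert (Hax : 0 < Rabs x) by (apply Rabs_pos_lt; auto).
      apply Rmult_le_reg_l with (Rabs x). exact Hax.
      replace (Rabs x * (C * Rabs x ^ S n)) with (C * Rabs x ^ S (S n)) by (simpl; ring). exact H. }
    intros k Hk. destruct k as [|k]. exact Hd0. apply (He k). lia.
Qed.

Lemma approx_poly_unique n a b : apx n (tpoly a n) (tpoly b n) -> forall k, (k <= n)%nat -> a k = b k.
Proof.
  intros [C [d [Hd H]]] k Hk.
  apply Rminus_diag_uniq.
  apply (poly_zero n (fun k => a k - b k) C d Hd); auto.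
  intros x _ Hx. unfold tpoly. 
  replace (sum_f_R0 (fun k0 => (a k0 - b k0) * x ^ k0) n) with (tpoly a n x - tpoly b n x).
  apply H; auto. unfold tpoly. rewrite <- minus_sum. apply sum_eq. intros; ring.
Qed.

Lemma TL_pos phi n x : smooth phi -> 0 < x -> exists z, 0 < z < x /\
  phi x - tpoly (T0 phi) n x = x ^ S n / INR (fact (S n)) * Derive_n phi (S n) z.
Proof.
  intros Hs Hx. destruct (Taylor_Lagrange phi n 0 x Hx) as [z [Hz E]].
  { intros; apply Hs. }
  exists z. split; auto. rewrite E. rewrite Rminus_0_r.
  unfold tpoly. replace (sum_f_R0 (fun m => x ^ m / INR (fact m) * Derive_n phi m 0) n)
    with (sum_f_R0 (fun k => T0 phi k * x ^ k) n). ring.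
  apply sum_eq. intros i _. unfold T0. field. apply not_0_INR. apply fact_neq_0.
Qed.

Lemma T0_opp phi k : smooth phi -> T0 (fun t => phi (- t)) k = (-1) ^ k * T0 phi k.
Proof.
  intros Hs. unfold T0. rewrite Derive_n_comp_opp. rewrite Ropp_0. field.
  apply not_0_INR. apply fact_neq_0.
  apply filter_forall. intros; apply Hs.
Qed.

Lemma Taylor_apx phi n : smooth phi -> apx n phi (tpoly (T0 phi) n).
Proof.
  intros Hs.
  destruct (continuity_ab_maj (fun t => Rabs (Derive_n phi (S n) t)) (-1) 1) as [Mx [HM _]].
  lra.
  { intros c _. apply (continuity_pt_comp (Derive_n phi (S n)) Rabs).
    apply continuity_pt_filterlim. apply (ex_derive_continuous (Derive_n phi (S n))). apply (Hs (S (S n))).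
    apply Rcontinuity_abs. }
  set (M := Rabs (Derive_n phi (S n) Mx)).
  assert (Hfact : forall m, 1 <= INR (fact m)).
  { intros m. replace 1 with (INR 1) by reflexivity. apply le_INR. pose proof (lt_O_fact m). lia. }
  assert (Hrem : forall y D, Rabs D <= M ->
     Rabs (y ^ S n / INR (fact (S n)) * D) <= M * Rabs y ^ S n).
  { intros y D Hz. unfold Rdiv. rewrite !Rabs_mult, <- RPow_abs.
    rewrite Rabs_inv. rewrite (Rabs_pos_eq (INR _)) by (pose proof (Hfact (S n)); lra).
    assert (0 < / INR (fact (S n)) <= 1).
    { pose proof (Hfact (S n)). split. apply Rinv_0_lt_compat; lra.
      rewrite <- Rinv_1. apply Rinv_le_contravar; lra. }
    assert (0 <= Rabs y ^ S n) by (apply pow_le; apply Rabs_pos).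
    pose proof (Rabs_pos D).
    assert (/ INR (fact (S n)) * Rabs D <= M) by nra.
    rewrite Rmult_assoc, (Rmult_comm M). apply Rmult_le_compat_l; auto. }
  exists M, 1. split. lra. intros x Hx.
  destruct (Rtotal_order x 0) as [Hneg|[H0|Hpos]].
  - set (psi := fun t => phi (- t)).
    assert (Hps : smooth psi) by (apply smooth_opp; auto).
    destruct (TL_pos psi n (- x) Hps ltac:(lra)) as [z [Hz E]].
    assert (E1 : psi (- x) = phi x) by (unfold psi; rewrite Ropp_involutive; auto).
    assert (E2 : tpoly (T0 psi) n (- x) = tpoly (T0 phi) n x).
    { unfold tpoly. apply sum_eq. intros i _. unfold psi. rewrite T0_opp by auto.
      replace ((-1) ^ i * T0 phi i * (- x) ^ i) with (T0 phi i * ((-1) * (- x)) ^ i)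
        by (rewrite Rpow_mult_distr; ring).
      f_equal. f_equal. ring. }
    rewrite E1, E2 in E. rewrite E.
    replace (Rabs x) with (Rabs (- x)) by apply Rabs_Ropp.
    apply Hrem. unfold psi. rewrite Derive_n_comp_opp.
    rewrite Rabs_mult, pow_1_abs, Rmult_1_l. apply HM.
    rewrite Rabs_left in Hx; lra.
    apply filter_forall; intros; apply Hs.
  - subst x. rewrite poly_at0. unfold T0. simpl.
    replace (phi 0 - phi 0 / 1) with 0 by field. rewrite Rabs_R0.
    simpl. rewrite Rmult_0_l, Rmult_0_r. lra.
  - destruct (TL_pos phi n x Hs Hpos) as [z [Hz E]]. rewrite E. apply Hrem.
    apply HM. rewrite Rabs_pos_eq in Hx; lra.
Qed.

Lemma sum_bound (f : nat -> R) K m : (forall i, (i <= m)%nat -> Rabs (f i) <= K) ->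
  Rabs (sum_f_R0 f m) <= K * INR (S m).
Proof.
  intros H. eapply Rle_trans. apply Rsum_abs. rewrite <- sum_cte. apply sum_Rle. auto.
Qed.

Lemma term_le_sum (f : nat -> R) N j : (forall i, 0 <= f i) -> (j <= N)%nat -> f j <= sum_f_R0 f N.
Proof.
  intros Hp. induction N as [|N IH]; intros Hj.
  - replace j with 0%nat by lia. simpl. lra.
  - simpl. destruct (Nat.eq_dec j (S N)) as [->|Hne].
    + assert (0 <= sum_f_R0 f N) by (apply cond_pos_sum; auto). lra.
    + specialize (IH ltac:(lia)). specialize (Hp (S N)). lra.
Qed.

Lemma cauchy_apx a c n : apx n (fun x => tpoly a n x * tpoly c n x) (tpoly (fps_mul a c) n).
Proof.
  destruct n as [|N'].
  - apply approx_ext. intros x. unfold tpoly, fps_mul. simpl. ring.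
  - set (N := S N').
    set (SA := sum_f_R0 (fun i => Rabs (a i)) N).
    set (SC := sum_f_R0 (fun i => Rabs (c i)) N).
    assert (HSA : 0 <= SA) by (apply cond_pos_sum; intros; apply Rabs_pos).
    assert (HSC : 0 <= SC) by (apply cond_pos_sum; intros; apply Rabs_pos).
    exists (SA * SC * INR (S N) * INR (S N)), 1. split. lra. intros x Hx.
    unfold tpoly at 1 2. rewrite (cauchy_finite (fun i => a i * x ^ i) (fun i => c i * x ^ i) N) by (unfold N; lia).
    replace (sum_f_R0 (fun k => sum_f_R0 (fun p => a p * x ^ p * (c (k - p)%nat * x ^ (k - p))) k) N)
      with (tpoly (fps_mul a c) N x).
    2:{ unfold tpoly, fps_mul. apply sum_eq. intros k _. rewrite Rmult_comm, scal_sum. apply sum_eq.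
        intros p Hp. replace (x ^ k) with (x ^ p * x ^ (k - p)). ring.
        rewrite <- pow_add. f_equal. lia. }
    match goal with |- Rabs (?A + ?B - ?A) <= _ => replace (A + B - A) with B by ring end.
    set (K := SA * SC * Rabs x ^ S N).
    assert (HK : 0 <= K) by (unfold K; apply Rmult_le_pos; [apply Rmult_le_pos; auto|apply pow_le; apply Rabs_pos]).
    assert (Hn1 : 1 <= INR (S N)) by (replace 1 with (INR 1) by reflexivity; apply le_INR; lia).
    apply Rle_trans with (K * INR (S (pred N)) * INR (S (pred N))).
    2:{ replace (S (pred N)) with N by (unfold N; lia).
        unfold K. assert (INR N <= INR (S N)) by (apply le_INR; lia).
        assert (0 <= INR N) by apply pos_INR.
        pose proof (pow_le (Rabs x) (S N) (Rabs_pos x)).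
        assert (0 <= SA * SC) by nra.
        replace (SA * SC * Rabs x ^ S N * INR N * INR N) with ((SA * SC) * (INR N * INR N) * Rabs x ^ S N) by ring.
        replace (SA * SC * INR (S N) * INR (S N) * Rabs x ^ S N) with ((SA * SC) * (INR (S N) * INR (S N)) * Rabs x ^ S N) by ring.
        apply Rmult_le_compat_r; auto. apply Rmult_le_compat_l; auto.
        apply Rmult_le_compat; auto. }
    apply sum_bound. intros k Hk.
    eapply Rle_trans. apply sum_bound with (K := K). 
    { intros l Hl. rewrite Rabs_mult, !Rabs_mult, <- !RPow_abs.
      assert (Ha : Rabs (a (S (l + k))) <= SA).
      { unfold SA. apply (term_le_sum (fun i => Rabs (a i))). intros; apply Rabs_pos. lia. }
      assert (Hc : Rabs (c (N - l)%nat) <= SC).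
      { unfold SC. apply (term_le_sum (fun i => Rabs (c i))). intros; apply Rabs_pos. lia. }
      assert (Hp : Rabs x ^ S (l + k) * Rabs x ^ (N - l) <= Rabs x ^ S N).
      { rewrite <- pow_add. replace (S (l + k) + (N - l))%nat with (S N + k)%nat by lia.
        rewrite pow_add. pose proof (pow_le (Rabs x) (S N) (Rabs_pos x)).
        assert (Rabs x ^ k <= 1) by (rewrite <- (pow1 k); apply pow_incr; split; [apply Rabs_pos|lra]).
        nra. }
      unfold K. pose proof (pow_le (Rabs x) (S (l+k)) (Rabs_pos x)).
      pose proof (pow_le (Rabs x) (N - l) (Rabs_pos x)).
      pose proof (Rabs_pos (a (S (l + k)))). pose proof (Rabs_pos (c (N - l)%nat)).
      replace (Rabs (a (S (l + k))) * Rabs x ^ S (l + k) * (Rabs (c (N - l)%nat) * Rabs x ^ (N - l)))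
        with ((Rabs (a (S (l + k))) * Rabs (c (N - l)%nat)) * (Rabs x ^ S (l + k) * Rabs x ^ (N - l))) by ring.
      apply Rmult_le_compat; try nra. }
    apply Rmult_le_compat_l; auto; apply le_INR; lia.
Qed.

Lemma tpoly_one n x : tpoly fps_one n x = 1.
Proof.
  unfold tpoly. induction n as [|n IH]. unfold fps_one. simpl. ring.
  simpl sum_f_R0. rewrite IH. unfold fps_one. simpl. ring.
Qed.

Lemma pow_apx b n k : apx n (fun x => tpoly b n x ^ k) (tpoly (fps_pow b k) n).
Proof.
  induction k as [|k IH].
  - apply approx_ext. intros x. simpl. rewrite tpoly_one. reflexivity.
  - simpl. apply approx_trans with (fun x => tpoly b n x * tpoly (fps_pow b k) n x).
    apply approx_mult_l. apply poly_bounded. exact IH.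
    apply cauchy_apx.
Qed.

Lemma pow_low b : b 0%nat = 0 -> forall k j, (j < k)%nat -> fps_pow b k j = 0.
Proof.
  intros Hb k. induction k as [|k IH]; intros j Hj. lia.
  simpl. unfold fps_mul. apply sum_eq_R0. intros i Hi.
  destruct i as [|i]. rewrite Hb. ring. rewrite IH. ring. lia.
Qed.

Lemma sum_exchange (f : nat -> nat -> R) N M :
  sum_f_R0 (fun k => sum_f_R0 (fun m => f k m) M) N = sum_f_R0 (fun m => sum_f_R0 (fun k => f k m) N) M.
Proof.
  induction N as [|N IH]. reflexivity.
  simpl. rewrite IH. rewrite <- plus_sum. reflexivity.
Qed.

Lemma sum_trunc (g : nat -> R) n m : (m <= n)%nat -> (forall k, (m < k)%nat -> (k <= n)%nat -> g k = 0) ->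
  sum_f_R0 g n = sum_f_R0 g m.
Proof.
  induction n as [|n IH]; intros Hmn H.
  - replace m with 0%nat by lia. reflexivity.
  - destruct (Nat.eq_dec m (S n)) as [->|Hne]. reflexivity.
    simpl. rewrite IH by (auto; lia). rewrite (H (S n)) by lia. ring.
Qed.

Lemma comp_apx a b n : b 0%nat = 0 ->
  apx n (fun x => tpoly a n (tpoly b n x)) (tpoly (fps_comp a b) n).
Proof.
  intros Hb.
  apply approx_trans with (fun x => sum_f_R0 (fun k => a k * tpoly (fps_pow b k) n x) n).
  - unfold tpoly at 1. apply approx_sum. intros k _. apply approx_scal. apply pow_apx.
  - apply approx_ext. intros x. unfold tpoly.
    transitivity (sum_f_R0 (fun k => sum_f_R0 (fun m => a k * fps_pow b k m * x ^ m) n) n).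
    { apply sum_eq. intros k _. rewrite scal_sum. apply sum_eq. intros; ring. }
    rewrite sum_exchange. apply sum_eq. intros m Hm.
    unfold fps_comp. rewrite (Rmult_comm _ (x ^ m)), scal_sum.
    rewrite (sum_trunc _ n m Hm). apply sum_eq. intros; ring.
    intros k Hk _. rewrite pow_low; auto. ring.
Qed.

Lemma T0_0 phi : T0 phi 0%nat = phi 0.
Proof. unfold T0. simpl. field. Qed.

Lemma comp_T0 phi psi : smooth phi -> smooth psi -> psi 0 = 0 ->
  T0 (fun x => phi (psi x)) = fps_comp (T0 phi) (T0 psi).
Proof.
  intros Hphi Hpsi H0. apply functional_extensionality. intros m.
  set (n := m).
  assert (Hb : T0 psi 0%nat = 0) by (rewrite T0_0; auto).
  assert (Tpsi := Taylor_apx psi n Hpsi).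
  assert (Bpsi : bnd psi) by (apply approx_bounded with (1 := Tpsi); apply poly_bounded).
  assert (A1 : apx n (fun x => phi (psi x)) (fun x => tpoly (T0 phi) n (psi x))).
  { apply approx_comp. apply Taylor_apx; auto.
    destruct (Taylor_apx psi 0 Hpsi) as [C [d [Hd H]]]. exists C, d. split; auto.
    intros x Hx. specialize (H x Hx). unfold tpoly in H. simpl in H. rewrite Hb in H.
    replace (psi x - 0 * 1) with (psi x) in H by ring.
    replace (Rabs x * 1) with (Rabs x) in H by ring. exact H. }
  assert (A2 : apx n (fun x => tpoly (T0 phi) n (psi x)) (fun x => tpoly (T0 phi) n (tpoly (T0 psi) n x))).
  { unfold tpoly at 1 2. apply approx_sum. intros k _. apply approx_scal.
    apply approx_pow; auto. apply poly_bounded. }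
  assert (A3 := comp_apx (T0 phi) (T0 psi) n Hb).
  assert (A4 := Taylor_apx (fun x => phi (psi x)) n (smooth_comp _ _ Hphi Hpsi)).
  apply (approx_poly_unique n). 2: unfold n; lia.
  apply approx_trans with (fun x => phi (psi x)). apply approx_sym; auto.
  apply approx_trans with (1 := A1). apply approx_trans with (1 := A2). exact A3.
Qed.

Lemma sum_delta (v : R) j N : (j <= N)%nat ->
  sum_f_R0 (fun i => if Nat.eqb i j then v else 0) N = v.
Proof.
  induction N as [|N IH]; intros Hj.
  - replace j with 0%nat by lia. simpl. reflexivity.
  - rewrite tech5. destruct (Nat.eq_dec j (S N)) as [->|Hne].
    + rewrite Nat.eqb_refl. rewrite sum_eq_R0. ring. intros n Hn.
      destruct (Nat.eqb_spec n (S N)). lia. reflexivity.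
    + rewrite IH by lia. replace (Nat.eqb (S N) j) with false by (symmetry; apply Nat.eqb_neq; lia). ring.
Qed.

Lemma fps_pow_diag b : b 0%nat = 0 -> forall m, fps_pow b m m = b 1%nat ^ m.
Proof.
  intros Hb m. induction m as [|m IH].
  - reflexivity.
  - simpl fps_pow. unfold fps_mul.
    rewrite (sum_eq _ (fun i => if Nat.eqb i 1 then b 1%nat * fps_pow b m m else 0)).
    rewrite sum_delta by lia. rewrite IH. reflexivity.
    intros i Hi. destruct (Nat.eqb_spec i 1) as [->|Hne].
    + f_equal. f_equal. lia.
    + destruct i as [|i]. rewrite Hb. ring. rewrite pow_low; auto. ring. lia.
Qed.

Lemma comp_cancel_r a c b : b 0%nat = 0 -> b 1%nat <> 0 ->
  fps_comp a b = fps_comp c b -> a = c.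
Proof.
  intros Hb0 Hb1 E. apply functional_extensionality.
  assert (forall m j, (j <= m)%nat -> a j = c j).
  { induction m as [|m IH]; intros j Hj.
    - replace j with 0%nat by lia. assert (E0 := f_equal (fun F => F 0%nat) E).
      unfold fps_comp in E0. simpl in E0. unfold fps_one in E0. simpl in E0. lra.
    - destruct (Nat.eq_dec j (S m)) as [->|Hne]; [|apply IH; lia].
      assert (E0 := f_equal (fun F => F (S m)) E). unfold fps_comp in E0. cbv beta in E0.
      rewrite !tech5 in E0.
      rewrite (sum_eq (fun k => a k * fps_pow b k (S m)) (fun k => c k * fps_pow b k (S m)) m) in E0.
      2:{ intros i Hi. rewrite IH by lia. reflexivity. }
      assert (E1 : a (S m) * fps_pow b (S m) (S m) = c (S m) * fps_pow b (S m) (S m)) by lra.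
      rewrite fps_pow_diag in E1 by auto.
      apply Rmult_eq_reg_r with (b 1%nat ^ S m). exact E1. apply pow_nonzero; auto. }
  intros m. apply (H m m). lia.
Qed.

Lemma fps_pow_X k m : fps_pow fps_X k m = if Nat.eqb k m then 1 else 0.
Proof.
  revert m. induction k as [|k IH]; intros m.
  - simpl. unfold fps_one. destruct m; reflexivity.
  - simpl fps_pow. unfold fps_mul.
    destruct m as [|m].
    + simpl. unfold fps_X. simpl. ring.
    + rewrite (sum_eq _ (fun i => if Nat.eqb i 1 then fps_pow fps_X k m else 0)).
      rewrite sum_delta by lia. rewrite IH. reflexivity.
      intros i Hi. unfold fps_X. destruct (Nat.eqb_spec i 1) as [->|Hne].
      * replace (S m - 1)%nat with m by lia. ring.
      * ring.
Qed.

Lemma comp_X_r a : fps_comp a fps_X = a.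
Proof.
  apply functional_extensionality. intros m. unfold fps_comp.
  rewrite (sum_eq _ (fun k => if Nat.eqb k m then a m else 0)).
  apply sum_delta; lia.
  intros i Hi. rewrite fps_pow_X. destruct (Nat.eqb_spec i m) as [->|]; ring.
Qed.

Lemma comp_X_l a : a 0%nat = 0 -> fps_comp fps_X a = a.
Proof.
  intros Ha. apply functional_extensionality. intros m. unfold fps_comp.
  destruct m as [|m].
  - simpl. unfold fps_X. simpl. rewrite Ha. ring.
  - rewrite (sum_eq _ (fun k => if Nat.eqb k 1 then fps_pow a 1 (S m) else 0)).
    rewrite sum_delta by lia. simpl. unfold fps_mul.
    rewrite (sum_eq _ (fun i => if Nat.eqb i (S m) then a (S m) else 0)).
    apply sum_delta; lia.
    intros i Hi. unfold fps_one. destruct (Nat.eqb_spec i (S m)) as [->|Hne].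
    + rewrite Nat.sub_diag. simpl. ring.
    + replace (Nat.eqb (S m - i) 0) with false. ring. symmetry. apply Nat.eqb_neq. lia.
    + intros i Hi. unfold fps_X. destruct (Nat.eqb_spec i 1) as [->|]; ring.
Qed.

Lemma T0_id : T0 (fun x => x) = fps_X.
Proof.
  apply functional_extensionality. intros n. unfold T0, fps_X.
  rewrite (Derive_n_ext (fun x => x) (fun x => x ^ 1)) by (intros; simpl; ring).
  rewrite Derive_n_pow.
  destruct n as [|[|n]]; simpl.
  - field.
  - field.
  - destruct (Compare_dec.le_dec (S (S n)) 1). lia. unfold Rdiv. ring.
Qed.

Lemma T0_ext f g : (forall x, f x = g x) -> T0 f = T0 g.
Proof. intros E. apply functional_extensionality in E. subst. reflexivity. Qed.

Lemma T0_1 f : T0 f 1%nat = Derive f 0.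
Proof. unfold T0. simpl. unfold Rdiv. rewrite Rinv_1, Rmult_1_r. reflexivity. Qed.

Lemma diffeo_deriv_nz h hinv : smooth h -> smooth hinv -> inverse_fun h hinv -> forall x, Derive h x <> 0.
Proof.
  intros Hh Hi [E1 E2] x Hz.
  assert (D : Derive (fun t => hinv (h t)) x = 1).
  { rewrite (Derive_ext _ (fun t => t)) by auto. apply Derive_id. }
  rewrite Derive_comp in D. rewrite Hz in D. lra.
  apply (Hi 1%nat). apply (Hh 1%nat).
Qed.

Lemma dec_inv f finv : (forall x y, x < y -> f y < f x) -> inverse_fun f finv ->
  forall x y, x < y -> finv y < finv x.
Proof.
  intros Hd [E1 E2] x y Hxy.
  destruct (Rtotal_order (finv x) (finv y)) as [H|[H|H]]; auto.
  - apply Hd in H. rewrite !E2 in H. lra.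
  - apply (f_equal f) in H. rewrite !E2 in H. lra.
Qed.

Lemma inc_inv f finv : (forall x y, x < y -> f x < f y) -> inverse_fun f finv ->
  forall x y, x < y -> finv x < finv y.
Proof.
  intros Hd [E1 E2] x y Hxy.
  destruct (Rtotal_order (finv x) (finv y)) as [H|[H|H]]; auto.
  - apply (f_equal f) in H. rewrite !E2 in H. lra.
  - apply Hd in H. rewrite !E2 in H. lra.
Qed.

Lemma smooth_inv h hinv : diffeo h -> inverse_fun h hinv -> smooth hinv.
Proof.
  intros [_ [g' [[G1 G2] Hg']]] [E1 E2].
  replace hinv with g'. auto.
  apply functional_extensionality. intros y. rewrite <- (E2 y) at 1. rewrite G1. reflexivity.
Qed.

Lemma diffeo_inv_ex h : diffeo h -> exists hinv, inverse_fun h hinv /\ smooth hinv.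
Proof. intros [_ H]. exact H. Qed.

Lemma T0_Derive_n phi psi : T0 phi = T0 psi -> forall n, Derive_n phi n 0 = Derive_n psi n 0.
Proof.
  intros E n. assert (E' := f_equal (fun F => F n) E). unfold T0 in E'. cbv beta in E'.
  apply Rmult_eq_reg_r with (/ INR (fact n)). exact E'.
  apply Rinv_neq_0_compat. apply not_0_INR. apply fact_neq_0.
Qed.

Lemma dir12 (f g : R -> R) :
  diffeo_minus f -> diffeo_minus g -> f 0 = 0 -> g 0 = 0 ->
   (exists h hinv : R -> R, diffeo_plus h /\ inverse_fun h hinv /\
      forall x, f x = hinv (g (h x))) ->
   (exists h1 h1inv : R -> R,
      diffeo_plus h1 /\ h1 0 = 0 /\ inverse_fun h1 h1inv /\
      (forall x, f (f x) = h1inv (g (g (h1 x)))) /\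
      exists h2 : R -> R,
        diffeo_plus h2 /\ h2 0 = 0 /\
        (forall x, h2 (f (f x)) = f (f (h2 x))) /\
        exists T0h2inv : fps,
          T0h2inv 0%nat = 0 /\
          fps_comp (T0 h2) T0h2inv = fps_X /\
          fps_comp T0h2inv (T0 h2) = fps_X /\
          T0 f = fps_comp T0h2inv
                   (fps_comp (T0 (fun x => h1inv (g (h1 x)))) (T0 h2))).
Proof.
  intros Hf Hg f0 g0 [h [hinv [Hh [Hinv Hconj]]]].
  destruct Hinv as [I1 I2].
  assert (h0 : h 0 = 0).
  { assert (E := Hconj 0). rewrite f0 in E. apply (f_equal h) in E. rewrite I2 in E.
    destruct Hg as [_ Hgd].
    destruct (Rtotal_order (h 0) 0) as [L|[L|L]]; auto.
    - pose proof L as L0. apply Hgd in L. rewrite g0 in L. lra.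
    - pose proof L as L0. apply Hgd in L. rewrite g0 in L. lra. }
  exists h, hinv. split; [exact Hh|]. split; [exact h0|]. split; [split; auto|].
  split.
  { intros x. rewrite (Hconj (f x)). f_equal. f_equal. rewrite (Hconj x), I2. reflexivity. }
  exists (fun x => x). split.
  { split. split. apply smooth_id. exists (fun x => x). split. split; auto. apply smooth_id.
    auto. }
  split; [reflexivity|]. split; [auto|].
  exists fps_X. split; [reflexivity|]. rewrite T0_id. split; [apply comp_X_r|].
  split; [apply comp_X_r|].
  rewrite comp_X_r. rewrite (T0_ext (fun x => hinv (g (h x))) f) by (intros; symmetry; auto).
  rewrite comp_X_l. reflexivity. rewrite T0_0. auto.
Qed.

Lemma dir21 (f g : R -> R) :
  diffeo_minus f -> diffeo_minus g -> f 0 = 0 -> g 0 = 0 ->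
   (exists h1 h1inv : R -> R,
      diffeo_plus h1 /\ h1 0 = 0 /\ inverse_fun h1 h1inv /\
      (forall x, f (f x) = h1inv (g (g (h1 x)))) /\
      exists h2 : R -> R,
        diffeo_plus h2 /\ h2 0 = 0 /\
        (forall x, h2 (f (f x)) = f (f (h2 x))) /\
        exists T0h2inv : fps,
          T0h2inv 0%nat = 0 /\
          fps_comp (T0 h2) T0h2inv = fps_X /\
          fps_comp T0h2inv (T0 h2) = fps_X /\
          T0 f = fps_comp T0h2inv
                   (fps_comp (T0 (fun x => h1inv (g (h1 x)))) (T0 h2))) ->
   (exists h hinv : R -> R, diffeo_plus h /\ inverse_fun h hinv /\
      forall x, f x = hinv (g (h x))).
Proof.
  intros Hf Hg f0 g0
    [h1 [h1inv [Hh1 [h10 [Hi1 [Ha [h2 [Hh2 [h20 [Hcomm [P [P0 [P1 [P2 PT]]]]]]]]]]]]]].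
  destruct Hf as [[Sf [finv [Hfi Sfinv]]] Hfdec].
  destruct Hg as [[Sg [ginv [Hgi Sginv]]] Hgdec].
  destruct Hh1 as [Hdh1 Hh1inc]. pose proof (proj1 Hdh1) as Sh1.
  pose proof (smooth_inv h1 h1inv Hdh1 Hi1) as Sh1inv.
  destruct Hh2 as [Hdh2 Hh2inc]. pose proof (proj1 Hdh2) as Sh2.
  destruct (diffeo_inv_ex h2 Hdh2) as [h2inv [Hi2 Sh2inv]].
  pose proof (dec_inv f finv Hfdec Hfi) as Hfinvdec.
  pose proof (dec_inv g ginv Hgdec Hgi) as Hginvdec.
  pose proof (inc_inv h1 h1inv Hh1inc Hi1) as Hh1invinc.
  pose proof (inc_inv h2 h2inv Hh2inc Hi2) as Hh2invinc.
  pose proof Hfi as [fi1 fi2]. pose proof Hgi as [gi1 gi2].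
  pose proof Hi1 as [i11 i12]. pose proof Hi2 as [i21 i22].
  assert (h1inv0 : h1inv 0 = 0) by (rewrite <- h10 at 1; apply i11).
  assert (h2inv0 : h2inv 0 = 0) by (rewrite <- h20 at 1; apply i21).
  assert (finv0 : finv 0 = 0) by (rewrite <- f0 at 1; apply fi1).
  assert (ginv0 : ginv 0 = 0) by (rewrite <- g0 at 1; apply gi1).
  set (g1 := fun x => h1inv (g (h1 x))).
  set (g2 := fun x => h2inv (g1 (h2 x))).
  set (g2inv := fun y => h2inv (h1inv (ginv (h1 (h2 y))))).
  assert (g1_0 : g1 0 = 0) by (unfold g1; rewrite h10, g0, h1inv0; reflexivity).
  assert (Sg1 : smooth g1) by (unfold g1; apply smooth_comp; [exact Sh1inv|apply smooth_comp; auto]).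
  assert (Sg2 : smooth g2) by (unfold g2; apply smooth_comp; auto; apply smooth_comp; auto).
  assert (Sg2inv : smooth g2inv) by (unfold g2inv; apply smooth_comp; [exact Sh2inv|]; apply smooth_comp; [exact Sh1inv|]; apply smooth_comp; [exact Sginv|]; apply smooth_comp; auto).
  assert (g2g2inv : forall y, g2 (g2inv y) = y).
  { intros y. unfold g2, g2inv, g1. rewrite i22, i12, gi2, i11, i21. reflexivity. }
  assert (g2invg2 : forall x, g2inv (g2 x) = x).
  { intros x. unfold g2, g2inv, g1. rewrite i22, i12, gi1, i11, i21. reflexivity. }
  assert (Hg2i : inverse_fun g2 g2inv) by (split; auto).
  assert (g2dec : forall x y, x < y -> g2 y < g2 x).
  { intros x y Hxy. unfold g2, g1. apply Hh2invinc, Hh1invinc, Hgdec, Hh1inc, Hh2inc. exact Hxy. }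
  pose proof (dec_inv g2 g2inv g2dec Hg2i) as g2invdec.
  assert (g2_0 : g2 0 = 0) by (unfold g2; rewrite h20, g1_0, h2inv0; reflexivity).
  assert (g2inv0 : g2inv 0 = 0) by (rewrite <- g2_0 at 1; apply g2invg2).
  assert (FF : forall x, g2 (g2 x) = f (f x)).
  { intros x. unfold g2. rewrite i22. unfold g1. rewrite i12. rewrite <- Ha.
    rewrite <- Hcomm. apply i21. }
  assert (Th2 : T0 h2inv = P).
  { symmetry. apply (comp_cancel_r P (T0 h2inv) (T0 h2)).
    rewrite T0_0; auto. rewrite T0_1. apply (diffeo_deriv_nz h2 h2inv); auto.
    rewrite P2. rewrite <- comp_T0; auto. rewrite (T0_ext _ (fun x => x)) by auto.
    rewrite T0_id. reflexivity. }
  assert (T0g2 : T0 g2 = T0 f).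
  { unfold g2. rewrite (comp_T0 h2inv (fun x => g1 (h2 x))); auto.
    2: apply smooth_comp; auto.
    2: rewrite h20; auto.
    rewrite (comp_T0 g1 h2); auto. rewrite Th2. rewrite PT. reflexivity. }
  set (k := fun x => g2 (finv x)).
  set (kinv := fun y => f (g2inv y)).
  assert (Tk : T0 k = T0 (fun x => x)).
  { unfold k. rewrite comp_T0; auto. rewrite T0g2. rewrite <- comp_T0; auto.
    apply T0_ext. auto. }
  assert (Tkinv : T0 kinv = T0 (fun x => x)).
  { unfold kinv. rewrite comp_T0; auto. rewrite <- T0g2. rewrite <- comp_T0; auto.
    apply T0_ext. auto. }
  set (H := glue k (fun x => x)).
  set (Hinv := glue kinv (fun x => x)).
  assert (SH : smooth H).
  { apply smooth_glue. unfold k; apply smooth_comp; auto. apply smooth_id.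
    apply T0_Derive_n. exact Tk. }
  assert (SHinv : smooth Hinv).
  { apply smooth_glue. unfold kinv; apply smooth_comp; auto. apply smooth_id.
    apply T0_Derive_n. exact Tkinv. }
  assert (finv_pos : forall x, x < 0 -> 0 < finv x).
  { intros x Hx. rewrite <- finv0. apply Hfinvdec. exact Hx. }
  assert (f_neg : forall x, 0 < x -> f x < 0).
  { intros x Hx. rewrite <- f0. apply Hfdec. exact Hx. }
  assert (f_pos : forall x, x < 0 -> 0 < f x).
  { intros x Hx. rewrite <- f0. apply Hfdec. exact Hx. }
  assert (g2inv_pos : forall x, x < 0 -> 0 < g2inv x).
  { intros x Hx. rewrite <- g2inv0. apply g2invdec. exact Hx. }
  assert (g2_neg : forall x, 0 < x -> g2 x < 0).
  { intros x Hx. rewrite <- g2_0. apply g2dec. exact Hx. }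
  assert (HinvH : forall x, Hinv (H x) = x).
  { intros x. unfold H, Hinv, glue. destruct (Rlt_dec x 0) as [Hx|Hx].
    - assert (Hk : k x < 0) by (unfold k; apply g2_neg, finv_pos; auto).
      destruct (Rlt_dec (k x) 0); [|lra]. unfold kinv, k. rewrite g2invg2. apply fi2.
    - destruct (Rlt_dec x 0); [lra|]. reflexivity. }
  assert (HHinv : forall y, H (Hinv y) = y).
  { intros y. unfold H, Hinv, glue. destruct (Rlt_dec y 0) as [Hy|Hy].
    - assert (Hk : kinv y < 0) by (unfold kinv; apply f_neg, g2inv_pos; auto).
      destruct (Rlt_dec (kinv y) 0); [|lra]. unfold kinv, k. rewrite fi1. apply g2g2inv.
    - destruct (Rlt_dec y 0); [lra|]. reflexivity. }
  assert (Hinc : forall x y, x < y -> H x < H y).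
  { intros x y Hxy. unfold H, glue.
    destruct (Rlt_dec x 0) as [Hx|Hx]; destruct (Rlt_dec y 0) as [Hy|Hy].
    - unfold k. apply g2dec. apply Hfinvdec. exact Hxy.
    - assert (k x < 0) by (unfold k; apply g2_neg, finv_pos; auto). lra.
    - lra.
    - exact Hxy. }
  assert (Conj : forall x, H (f x) = g2 (H x)).
  { intros x. unfold H, glue.
    destruct (Rtotal_order x 0) as [Hx|[Hx|Hx]].
    - destruct (Rlt_dec x 0); [|lra]. destruct (Rlt_dec (f x) 0) as [Hfx|Hfx].
      + pose proof (f_pos x Hx). lra.
      + unfold k. rewrite FF, fi2. reflexivity.
    - subst x. rewrite f0. destruct (Rlt_dec 0 0); [lra|]. auto.
    - destruct (Rlt_dec x 0); [lra|]. destruct (Rlt_dec (f x) 0) as [Hfx|Hfx].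
      + unfold k. rewrite fi1. reflexivity.
      + pose proof (f_neg x Hx). lra. }
  exists (fun x => h1 (h2 (H x))), (fun y => Hinv (h2inv (h1inv y))).
  split; [|split].
  - split. split.
    + apply smooth_comp; [exact Sh1|]; apply smooth_comp; auto.
    + exists (fun y => Hinv (h2inv (h1inv y))). split.
      * split; intros; [rewrite i11, i21; auto|rewrite HHinv, i22, i12; auto].
      * apply smooth_comp; [exact SHinv|]; apply smooth_comp; auto.
    + intros x y Hxy. apply Hh1inc, Hh2inc, Hinc. exact Hxy.
  - split; intros; [rewrite i11, i21; auto|rewrite HHinv, i22, i12; auto].
  - intros x. change (h1inv (g (h1 (h2 (H x))))) with (g1 (h2 (H x))).
    change (h2inv (g1 (h2 (H x)))) with (g2 (H x)). rewrite <- Conj. symmetry. apply HinvH.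
Qed.

Theorem theorem2p2 (f g : R -> R) :
  diffeo_minus f -> diffeo_minus g -> f 0 = 0 -> g 0 = 0 ->
  ((* (1) f = h^{-1} o g o h, h orientation preserving *)
   (exists h hinv : R -> R, diffeo_plus h /\ inverse_fun h hinv /\
      forall x, f x = hinv (g (h x)))
   <->
   (* (2) *)
   (exists h1 h1inv : R -> R,
      diffeo_plus h1 /\ h1 0 = 0 /\ inverse_fun h1 h1inv /\
      (* (a) f o f = h1^{-1} o (g o g) o h1 *)
      (forall x, f (f x) = h1inv (g (g (h1 x)))) /\
      (* (b) with g1 = h1^{-1} o g o h1 *)
      exists h2 : R -> R,
        diffeo_plus h2 /\ h2 0 = 0 /\
        (forall x, h2 (f (f x)) = f (f (h2 x))) /\
        (* (T0 h2)^{-1}: the compositional inverse in F *)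
        exists T0h2inv : fps,
          T0h2inv 0%nat = 0 /\
          fps_comp (T0 h2) T0h2inv = fps_X /\
          fps_comp T0h2inv (T0 h2) = fps_X /\
          T0 f = fps_comp T0h2inv
                   (fps_comp (T0 (fun x => h1inv (g (h1 x)))) (T0 h2)))).
Proof.
  intros Hf Hg f0 g0. split.
  - apply dir12; auto.
  - apply dir21; auto.
Qed.
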